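(* Let $a>0$ and let $L_3=a\mathbb{Z}^3\cup a(\mathbb{Z}+\tfrac12)^3\cup W\cup\Lambda$. The Voronoi cell of the origin with respect to $L_3$ is the regular octahedron $$\{(x,y,z)\in\mathbb{R}^3:\ |x|+|y|+|z|\le \tfrac{5a}{16}\},$$ whose volume is $$V^{(3)}_\Gamma=\frac{125}{3072}a^3 .$$ The same holds, after translation, for every point of $a\mathbb{Z}^3\cup a(\mathbb{Z}+\tfrac12)^3$.
   Context: Fix $a>0$. $W\subset\mathbb{R}^3$ is the set of all points $a(u_1,u_2,u_3)$ such that $(u_1,u_2,u_3)$ is a permutation of a triple $(i,\ j+\tfrac12,\ k+\varepsilon)$ with $i,j,k\in\mathbb{Z}$ and $\varepsilon\in\{\tfrac14,\tfrac34\}$. $\Lambda=\{p+\tfrac{5a}{24}(s_1,s_2,s_3): p\in a\mathbb{Z}^3\cup a(\mathbb{Z}+\tfrac12)^3,\ s_i\in\{-1,1\}\}$. For a discrete set $P\subset\mathbb{R}^3$ and $p\in P$, the Voronoi cell of $p$ with respect to $P$ is $\{x\in\mathbb{R}^3: |x-p|\le|x-q|\ \text{for all } q\in P\}$. *)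

(* Defs.v *)
From Stdlib Require Import Reals ClassicalEpsilon.
Open Scope R_scope.

Definition pt := (R * R * R)%type.

Definition px (p : pt) : R := fst (fst p).
Definition py (p : pt) : R := snd (fst p).
Definition pz (p : pt) : R := snd p.

Definition dist3 (p q : pt) : R :=
  sqrt ((px p - px q)^2 + (py p - py q)^2 + (pz p - pz q)^2).

Definition BCC (a : R) (p : pt) : Prop :=
  exists i j k : Z,
    p = (a * IZR i, a * IZR j, a * IZR k) \/
    p = (a * (IZR i + 1/2), a * (IZR j + 1/2), a * (IZR k + 1/2)).

Definition perm3 (u1 u2 u3 t1 t2 t3 : R) : Prop :=
  (u1 = t1 /\ u2 = t2 /\ u3 = t3) \/ (u1 = t1 /\ u2 = t3 /\ u3 = t2) \/
  (u1 = t2 /\ u2 = t1 /\ u3 = t3) \/ (u1 = t2 /\ u2 = t3 /\ u3 = t1) \/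
  (u1 = t3 /\ u2 = t1 /\ u3 = t2) \/ (u1 = t3 /\ u2 = t2 /\ u3 = t1).

Definition Wset (a : R) (p : pt) : Prop :=
  exists (u1 u2 u3 : R) (i j k : Z) (eps : R),
    (eps = 1/4 \/ eps = 3/4) /\
    perm3 u1 u2 u3 (IZR i) (IZR j + 1/2) (IZR k + eps) /\
    p = (a * u1, a * u2, a * u3).

Definition Lam (a : R) (p : pt) : Prop :=
  exists (q : pt) (s1 s2 s3 : R),
    BCC a q /\ (s1 = -1 \/ s1 = 1) /\ (s2 = -1 \/ s2 = 1) /\ (s3 = -1 \/ s3 = 1) /\
    p = (px q + 5 * a / 24 * s1, py q + 5 * a / 24 * s2, pz q + 5 * a / 24 * s3).

Definition L3 (a : R) (p : pt) : Prop := BCC a p \/ Wset a p \/ Lam a p.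

Definition voronoi (P : pt -> Prop) (p : pt) (x : pt) : Prop :=
  forall q : pt, P q -> dist3 x p <= dist3 x q.

Definition indic (S : pt -> Prop) (x : pt) : R :=
  if excluded_middle_informative (S x) then 1 else 0.

(* Volume of S, for S contained in the cube with center c and half side B,
   defined as the iterated Riemann integral (dz, then dy, then dx) of the
   indicator of S over that cube; vol3 S c B v says all the iterated
   integrals exist and the result is v. *)
Definition vol3 (S : pt -> Prop) (c : pt) (B v : R) : Prop :=
  exists (F : R -> R -> R) (G : R -> R),
    (forall x y : R, exists pr : Riemann_integrable (fun z => indic S (x, y, z))
                                   (pz c - B) (pz c + B), RiemannInt pr = F x y) /\
    (forall x : R, exists pr : Riemann_integrable (F x) (py c - B) (py c + B),
                     RiemannInt pr = G x) /\
    (exists pr : Riemann_integrable G (px c - B) (px c + B), RiemannInt pr = v).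

(* Main.v *)
Require Import Defs.
From Stdlib Require Import Reals Lra Psatz ZArith ClassicalEpsilon.
From Coquelicot Require Import Coquelicot.
Open Scope R_scope.
Lemma chas (f : R -> R) a b c l1 l2 l :
  is_RInt f a b l1 -> is_RInt f b c l2 -> l = l1 + l2 -> is_RInt f a c l.
Proof. intros H1 H2 ->. exact (is_RInt_Chasles f a b c l1 l2 H1 H2). Qed.

Lemma const_piece (f : R -> R) a b k : a <= b ->
  (forall x, a < x < b -> f x = k) -> is_RInt f a b ((b - a) * k).
Proof.
  intros Hab H.
  apply is_RInt_ext with (f := fun _ => k).
  - intros x; rewrite Rmin_left, Rmax_right by lra. intros Hx; symmetry; apply H; lra.
  - exact (is_RInt_const a b k).
Qed.

Lemma poly_piece (f F dF : R -> R) a b : a <= b ->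
  (forall x, a < x < b -> f x = dF x) ->
  (forall x, is_derive F x (dF x)) -> (forall x, continuous dF x) ->
  is_RInt f a b (F b - F a).
Proof.
  intros Hab H HD HC.
  apply is_RInt_ext with (f := dF).
  - intros x; rewrite Rmin_left, Rmax_right by lra. intros Hx; symmetry; apply H; lra.
  - exact (is_RInt_derive F dF a b (fun x _ => HD x) (fun x _ => HC x)).
Qed.

Ltac rabs := unfold Rabs, Rmax in *; repeat match goal with
  | |- context[Rcase_abs ?t] => destruct (Rcase_abs t)
  | H : context[Rcase_abs ?t] |- _ => destruct (Rcase_abs t)
  | |- context[Rle_dec ?x ?y] => destruct (Rle_dec x y)
  | H : context[Rle_dec ?x ?y] |- _ => destruct (Rle_dec x y)
  end.

Lemma ind1 (f : R -> R) c a r : 0 < a -> r < a ->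
  (forall z, Rabs (z - c) <= r -> f z = 1) ->
  (forall z, r < Rabs (z - c) -> f z = 0) ->
  is_RInt f (c - a) (c + a) (2 * Rmax 0 r).
Proof.
  intros Ha Hr H1 H0.
  destruct (Rle_or_lt r 0) as [Hn|Hp].
  - apply chas with c ((c - (c - a)) * 0) (((c + a) - c) * 0).
    + apply const_piece; [lra|]. intros x Hx; apply H0; rabs; lra.
    + apply const_piece; [lra|]. intros x Hx; apply H0; rabs; lra.
    + rabs; lra.
  - apply chas with (c - r) (((c - r) - (c - a)) * 0) (2 * r).
    + apply const_piece; [lra|]. intros x Hx; apply H0; rabs; lra.
    + apply chas with (c + r) (((c + r) - (c - r)) * 1) (((c + a) - (c + r)) * 0).
      * apply const_piece; [lra|]. intros x Hx; apply H1; rabs; lra.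
      * apply const_piece; [lra|]. intros x Hx; apply H0; rabs; lra.
      * ring.
    + rabs; lra.
Qed.

Lemma tri2 c a s : 0 < a -> s < a ->
  is_RInt (fun y => 2 * Rmax 0 (s - Rabs (y - c))) (c - a) (c + a) (2 * (Rmax 0 s) ^ 2).
Proof.
  intros Ha Hs.
  destruct (Rle_or_lt s 0) as [Hn|Hp].
  - replace (2 * (Rmax 0 s) ^ 2) with (((c + a) - (c - a)) * 0) by (rabs; [nra|nra]).
    apply const_piece; [lra|]. intros x Hx; rabs; lra.
  - apply chas with (c - s) (((c - s) - (c - a)) * 0) (2 * s ^ 2).
    + apply const_piece; [lra|]. intros x Hx; rabs; lra.
    + apply chas with (c + s) (2 * s ^ 2) (((c + a) - (c + s)) * 0).
      * apply chas with c (((fun y => (y - c + s) ^ 2) c) - ((fun y => (y - c + s) ^ 2) (c - s)))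
          (((fun y => - (c + s - y) ^ 2) (c + s)) - ((fun y => - (c + s - y) ^ 2) c)).
        ++ apply (poly_piece _ (fun y => (y - c + s) ^ 2) (fun y => 2 * (y - c + s))); [lra| | |].
          ** intros x Hx; rabs; lra.
          ** intros x; auto_derive; auto; ring.
          ** intros x; apply (@ex_derive_continuous R_AbsRing R_NormedModule); auto_derive; auto.
        ++ apply (poly_piece _ (fun y => - (c + s - y) ^ 2) (fun y => 2 * (c + s - y))); [lra| | |].
          ** intros x Hx; rabs; lra.
          ** intros x; auto_derive; auto; ring.
          ** intros x; apply (@ex_derive_continuous R_AbsRing R_NormedModule); auto_derive; auto.
        ++ simpl; ring.
      * apply const_piece; [lra|]. intros x Hx; rabs; lra.
      * ring.
    + rabs; lra.
Qed.

Lemma tri3 c a r : 0 < r -> r < a ->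
  is_RInt (fun x => 2 * (Rmax 0 (r - Rabs (x - c))) ^ 2) (c - a) (c + a) (4 * r ^ 3 / 3).
Proof.
  intros Hr Hra.
  apply chas with (c - r) (((c - r) - (c - a)) * 0) (4 * r ^ 3 / 3).
  + apply const_piece; [lra|]. intros x Hx; rabs; lra.
  + apply chas with (c + r) (4 * r ^ 3 / 3) (((c + a) - (c + r)) * 0).
    * apply chas with c (((fun y => 2 * (y - c + r) ^ 3 / 3) c) - ((fun y => 2 * (y - c + r) ^ 3 / 3) (c - r)))
        (((fun y => - 2 * (c + r - y) ^ 3 / 3) (c + r)) - ((fun y => - 2 * (c + r - y) ^ 3 / 3) c)).
      -- apply (poly_piece _ (fun y => 2 * (y - c + r) ^ 3 / 3) (fun y => 2 * (y - c + r) ^ 2)); [lra| | |].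
         ++ intros x Hx; rabs; try lra; f_equal; f_equal; lra.
         ++ intros x; auto_derive; auto; field.
         ++ intros x; apply (@ex_derive_continuous R_AbsRing R_NormedModule); auto_derive; auto.
      -- apply (poly_piece _ (fun y => - 2 * (c + r - y) ^ 3 / 3) (fun y => 2 * (c + r - y) ^ 2)); [lra| | |].
         ++ intros x Hx; rabs; try lra; f_equal; f_equal; lra.
         ++ intros x; auto_derive; auto; field.
         ++ intros x; apply (@ex_derive_continuous R_AbsRing R_NormedModule); auto_derive; auto.
      -- simpl; field.
    * apply const_piece; [lra|]. intros x Hx; rabs; lra.
    * ring.
  + ring.
Qed.
Lemma RI_of (f : R -> R) a b l : is_RInt f a b l ->
  exists pr : Riemann_integrable f a b, RiemannInt pr = l.
Proof.
  intros H. exists (ex_RInt_Reals_0 _ _ _ (ex_intro _ l H)).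
  rewrite <- RInt_Reals. now apply is_RInt_unique.
Qed.

Lemma vol_oct (S : pt -> Prop) c a r : 0 < r < a ->
  (forall y, S y <-> Rabs (px y - px c) + Rabs (py y - py c) + Rabs (pz y - pz c) <= r) ->
  vol3 S c a (4 * r ^ 3 / 3).
Proof.
  intros [Hr Hra] HS.
  exists (fun x y => 2 * Rmax 0 (r - Rabs (x - px c) - Rabs (y - py c))).
  exists (fun x => 2 * (Rmax 0 (r - Rabs (x - px c))) ^ 2).
  split; [|split].
  - intros x y. apply RI_of. apply ind1; [lra| |intros z Hz|intros z Hz].
    + pose proof (Rabs_pos (x - px c)); pose proof (Rabs_pos (y - py c)); lra.
    + unfold indic. destruct excluded_middle_informative as [h|h]; [reflexivity|].
      exfalso; apply h, HS. change (px (x,y,z)) with x; change (py (x,y,z)) with y; change (pz (x,y,z)) with z. lra.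
    + unfold indic. destruct excluded_middle_informative as [h|h]; [|reflexivity].
      apply HS in h. change (px (x,y,z)) with x in h; change (py (x,y,z)) with y in h; change (pz (x,y,z)) with z in h. lra.
  - intros x. apply RI_of. apply tri2; [lra|].
    pose proof (Rabs_pos (x - px c)); lra.
  - apply RI_of. apply tri3; lra.
Qed.
Definition isZ (v : R) := exists i : Z, v = IZR i.
Definition isH (v : R) := exists i : Z, v = IZR i + 1/2.
Definition isQ (v : R) := exists i : Z, v = IZR i + 1/4 \/ v = IZR i + 3/4.

Lemma Zcases (i : Z) : IZR i = 0 \/ 1 <= IZR i \/ IZR i <= -1.
Proof.
  destruct (Z.lt_trichotomy i 0) as [h|[h|h]].
  - right; right. apply IZR_le. lia.
  - left; subst; reflexivity.
  - right; left. apply IZR_le. lia.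
Qed.

Lemma isZ_b v : isZ v -> v = 0 \/ 1 <= v \/ v <= -1.
Proof. intros [i ->]; apply Zcases. Qed.
Lemma isH_b v : isH v -> 1/2 <= v \/ v <= - (1/2).
Proof. intros [i ->]; destruct (Zcases i) as [h|[h|h]]; lra. Qed.
Lemma isQ_b v : isQ v -> 1/4 <= v \/ v <= - (1/4).
Proof. intros [i [-> | ->]]; destruct (Zcases i) as [h|[h|h]]; lra. Qed.

Lemma addZZ x y : isZ x -> isZ y -> isZ (x + y).
Proof. intros [i ->] [j ->]; exists (i + j)%Z; rewrite plus_IZR; ring. Qed.
Lemma addHZ x y : isH x -> isZ y -> isH (x + y).
Proof. intros [i ->] [j ->]; exists (i + j)%Z; rewrite plus_IZR; ring. Qed.
Lemma addZH x y : isZ x -> isH y -> isH (x + y).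
Proof. intros [i ->] [j ->]; exists (i + j)%Z; rewrite plus_IZR; ring. Qed.
Lemma addHH x y : isH x -> isH y -> isZ (x + y).
Proof. intros [i ->] [j ->]; exists (i + j + 1)%Z; rewrite !plus_IZR; simpl; field. Qed.
Lemma addQZ x y : isQ x -> isZ y -> isQ (x + y).
Proof. intros [i [-> | ->]] [j ->]; exists (i + j)%Z; rewrite plus_IZR; [left|right]; ring. Qed.
Lemma addQH x y : isQ x -> isH y -> isQ (x + y).
Proof.
  intros [i [-> | ->]] [j ->].
  - exists (i + j)%Z; rewrite plus_IZR; right; field.
  - exists (i + j + 1)%Z; rewrite !plus_IZR; left; simpl; field.
Qed.
Lemma negZ x : isZ x -> isZ (- x).
Proof. intros [i ->]; exists (- i)%Z; rewrite opp_IZR; ring. Qed.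
Lemma negH x : isH x -> isH (- x).
Proof. intros [i ->]; exists (- i - 1)%Z; rewrite minus_IZR, opp_IZR; simpl; field. Qed.

Definition BCCc u1 u2 u3 := (isZ u1 /\ isZ u2 /\ isZ u3) \/ (isH u1 /\ isH u2 /\ isH u3).
Definition Wc u1 u2 u3 :=
  (isZ u1 /\ isH u2 /\ isQ u3) \/ (isZ u1 /\ isQ u2 /\ isH u3) \/
  (isH u1 /\ isZ u2 /\ isQ u3) \/ (isH u1 /\ isQ u2 /\ isZ u3) \/
  (isQ u1 /\ isZ u2 /\ isH u3) \/ (isQ u1 /\ isH u2 /\ isZ u3).

Definition tri a u1 u2 u3 : pt := (a * u1, a * u2, a * u3).

Lemma BCC_iff a p : BCC a p <-> exists u1 u2 u3, p = tri a u1 u2 u3 /\ BCCc u1 u2 u3.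
Proof.
  split.
  - intros (i & j & k & [-> | ->]).
    + exists (IZR i), (IZR j), (IZR k); split; [reflexivity|].
      left; repeat split; eexists; reflexivity.
    + exists (IZR i + 1/2), (IZR j + 1/2), (IZR k + 1/2); split; [reflexivity|].
      right; repeat split; eexists; reflexivity.
  - intros (u1 & u2 & u3 & -> & [([i ->] & [j ->] & [k ->]) | ([i ->] & [j ->] & [k ->])]);
      exists i, j, k; [left|right]; reflexivity.
Qed.

Lemma W_iff a p : Wset a p <-> exists u1 u2 u3, p = tri a u1 u2 u3 /\ Wc u1 u2 u3.
Proof.
  split.
  - intros (u1 & u2 & u3 & i & j & k & eps & He & Hp & ->).
    exists u1, u2, u3; split; [reflexivity|].
    assert (Z1 : isZ (IZR i)) by (eexists; reflexivity).
    assert (H1 : isH (IZR j + 1/2)) by (eexists; reflexivity).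
    assert (Q1 : isQ (IZR k + eps)) by (exists k; destruct He; subst; auto).
    unfold Wc.
    destruct Hp as [(->&->&->)|[(->&->&->)|[(->&->&->)|[(->&->&->)|[(->&->&->)|(->&->&->)]]]]];
      tauto.
  - intros (u1 & u2 & u3 & -> & Hw).
    unfold Wset, perm3.
    destruct Hw as [(Z1&H1&Q1)|[(Z1&Q1&H1)|[(H1&Z1&Q1)|[(H1&Q1&Z1)|[(Q1&Z1&H1)|(Q1&H1&Z1)]]]]];
      destruct Z1 as [i Z1]; destruct H1 as [j H1]; destruct Q1 as [k [Q1|Q1]];
      exists u1, u2, u3, i, j, k;
      first [ solve [exists (1/4); split; [lra| split; [rewrite Z1, H1, Q1; tauto | reflexivity]]]
            | solve [exists (3/4); split; [lra| split; [rewrite Z1, H1, Q1; tauto | reflexivity]]]].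
Qed.

Definition good3 u1 u2 u3 :=
  5/8 * Rabs u1 <= u1^2 + u2^2 + u3^2 /\
  5/8 * Rabs u2 <= u1^2 + u2^2 + u3^2 /\
  5/8 * Rabs u3 <= u1^2 + u2^2 + u3^2.

Lemma good12 a b c : good3 a b c -> good3 b a c.
Proof. unfold good3; lra. Qed.
Lemma good23 a b c : good3 a b c -> good3 a c b.
Proof. unfold good3; lra. Qed.

Lemma sqa v : v ^ 2 = Rabs v ^ 2.
Proof. unfold Rabs; destruct Rcase_abs; ring. Qed.

Lemma sqge al w : 0 <= al -> al <= Rabs w -> al ^ 2 <= w ^ 2.
Proof. intros h1 h2. rewrite (sqa w). nra. Qed.

Lemma absge v al : 0 <= al -> (al <= v \/ v <= - al) -> al <= Rabs v.
Proof. intros h [h1|h1]; rabs; lra. Qed.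

Lemma sq0 w : 0 <= w ^ 2.
Proof. nra. Qed.

Lemma cZ v w1 w2 : isZ v -> 5/8 * Rabs v <= v^2 + w1^2 + w2^2.
Proof.
  intros h. pose proof (sq0 w1); pose proof (sq0 w2).
  destruct (isZ_b v h) as [->|h1].
  - rewrite Rabs_R0. nra.
  - assert (1 <= Rabs v) by (apply absge; lra).
    rewrite (sqa v). nra.
Qed.

Lemma cgen v w1 w2 al b1 b2 : 0 <= al -> 0 <= b1 -> 0 <= b2 ->
  al <= Rabs v -> b1 <= Rabs w1 -> b2 <= Rabs w2 ->
  (forall m, al <= m -> 5/8 * m <= m ^ 2 + b1 ^ 2 + b2 ^ 2) ->
  5/8 * Rabs v <= v^2 + w1^2 + w2^2.
Proof.
  intros h0 h1 h2 hv hw1 hw2 P.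
  pose proof (sqge _ _ h1 hw1); pose proof (sqge _ _ h2 hw2).
  specialize (P (Rabs v) hv). rewrite (sqa v). lra.
Qed.

Lemma goodBCC u1 u2 u3 : BCCc u1 u2 u3 -> good3 u1 u2 u3.
Proof.
  intros [(h1&h2&h3)|(h1&h2&h3)]; unfold good3.
  - split; [|split].
    + apply cZ; auto.
    + replace (u1^2+u2^2+u3^2) with (u2^2+u1^2+u3^2) by ring. apply cZ; auto.
    + replace (u1^2+u2^2+u3^2) with (u3^2+u1^2+u2^2) by ring. apply cZ; auto.
  - pose proof (absge u1 (1/2) ltac:(lra) (isH_b _ h1)).
    pose proof (absge u2 (1/2) ltac:(lra) (isH_b _ h2)).
    pose proof (absge u3 (1/2) ltac:(lra) (isH_b _ h3)).
    split; [|split].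
    + apply (cgen _ _ _ (1/2) (1/2) (1/2)); auto; try lra. intros; nra.
    + replace (u1^2+u2^2+u3^2) with (u2^2+u1^2+u3^2) by ring.
      apply (cgen _ _ _ (1/2) (1/2) (1/2)); auto; try lra. intros; nra.
    + replace (u1^2+u2^2+u3^2) with (u3^2+u1^2+u2^2) by ring.
      apply (cgen _ _ _ (1/2) (1/2) (1/2)); auto; try lra. intros; nra.
Qed.

Lemma goodW0 u1 u2 u3 : isZ u1 -> isH u2 -> isQ u3 -> good3 u1 u2 u3.
Proof.
  intros h1 h2 h3.
  pose proof (absge u2 (1/2) ltac:(lra) (isH_b _ h2)).
  pose proof (absge u3 (1/4) ltac:(lra) (isQ_b _ h3)).
  split; [|split].
  - apply cZ; auto.
  - replace (u1^2+u2^2+u3^2) with (u2^2+u3^2+u1^2) by ring.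
    apply (cgen _ _ _ (1/2) (1/4) 0); auto; try lra.
    + apply Rabs_pos.
    + intros; nra.
  - replace (u1^2+u2^2+u3^2) with (u3^2+u2^2+u1^2) by ring.
    apply (cgen _ _ _ (1/4) (1/2) 0); auto; try lra.
    + apply Rabs_pos.
    + intros; nra.
Qed.

Lemma goodW u1 u2 u3 : Wc u1 u2 u3 -> good3 u1 u2 u3.
Proof.
  intros [(h1&h2&h3)|[(h1&h2&h3)|[(h1&h2&h3)|[(h1&h2&h3)|[(h1&h2&h3)|(h1&h2&h3)]]]]];
  first [ solve [apply goodW0; auto] | solve [apply good12, goodW0; auto]
        | solve [apply good23, goodW0; auto] | solve [apply good12, good23, goodW0; auto]
        | solve [apply good23, good12, goodW0; auto] | solve [apply good12, good23, good12, goodW0; auto] ].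
Qed.

Lemma sum3 a b c : 0 <= a^2 + b^2 + c^2.
Proof. pose proof (sq0 a); pose proof (sq0 b); pose proof (sq0 c); lra. Qed.

Lemma lamZ n s : isZ n -> (s = -1 \/ s = 1) ->
  Rabs (n + 5/24 * s) = 5/24 \/ 19/24 <= Rabs (n + 5/24 * s).
Proof. intros h hs. destruct (isZ_b n h) as [h1|[h1|h1]]; destruct hs; subst; rabs; lra. Qed.

Lemma lamH n s : isH n -> (s = -1 \/ s = 1) -> 7/24 <= Rabs (n + 5/24 * s).
Proof. intros h hs. destruct (isH_b n h) as [h1|h1]; destruct hs; subst; rabs; lra. Qed.

Lemma lamZ' n s : isZ n -> (s = -1 \/ s = 1) -> 5/24 <= Rabs (n + 5/24 * s).
Proof. intros h hs. destruct (lamZ n s h hs); lra. Qed.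

Lemma cLZ v w1 w2 : (Rabs v = 5/24 \/ 19/24 <= Rabs v) -> 5/24 <= Rabs w1 -> 5/24 <= Rabs w2 ->
  5/8 * Rabs v <= v^2 + w1^2 + w2^2.
Proof.
  intros hv h1 h2.
  pose proof (sqge (5/24) w1 ltac:(lra) h1); pose proof (sqge (5/24) w2 ltac:(lra) h2).
  rewrite (sqa v). destruct hv as [hv|hv].
  - rewrite hv. lra.
  - nra.
Qed.

Lemma goodLam d1 d2 d3 s1 s2 s3 : BCCc d1 d2 d3 ->
  (s1 = -1 \/ s1 = 1) -> (s2 = -1 \/ s2 = 1) -> (s3 = -1 \/ s3 = 1) ->
  good3 (d1 + 5/24 * s1) (d2 + 5/24 * s2) (d3 + 5/24 * s3).
Proof.
  intros [(h1&h2&h3)|(h1&h2&h3)] e1 e2 e3; unfold good3.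
  - pose proof (lamZ _ _ h1 e1); pose proof (lamZ _ _ h2 e2); pose proof (lamZ _ _ h3 e3).
    pose proof (lamZ' _ _ h1 e1); pose proof (lamZ' _ _ h2 e2); pose proof (lamZ' _ _ h3 e3).
    split; [|split].
    + apply cLZ; auto.
    + match goal with |- _ <= ?A^2 + ?B^2 + ?C^2 => replace (A^2+B^2+C^2) with (B^2+A^2+C^2) by ring end.
      apply cLZ; auto.
    + match goal with |- _ <= ?A^2 + ?B^2 + ?C^2 => replace (A^2+B^2+C^2) with (C^2+A^2+B^2) by ring end.
      apply cLZ; auto.
  - pose proof (lamH _ _ h1 e1); pose proof (lamH _ _ h2 e2); pose proof (lamH _ _ h3 e3).
    split; [|split].
    + apply (cgen _ _ _ (7/24) (7/24) (7/24)); auto; try lra. intros m _; pose proof (sq0 (m - 5/16)); nra.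
    + match goal with |- _ <= ?A^2 + ?B^2 + ?C^2 => replace (A^2+B^2+C^2) with (B^2+A^2+C^2) by ring end.
      apply (cgen _ _ _ (7/24) (7/24) (7/24)); auto; try lra. intros m _; pose proof (sq0 (m - 5/16)); nra.
    + match goal with |- _ <= ?A^2 + ?B^2 + ?C^2 => replace (A^2+B^2+C^2) with (C^2+A^2+B^2) by ring end.
      apply (cgen _ _ _ (7/24) (7/24) (7/24)); auto; try lra. intros m _; pose proof (sq0 (m - 5/16)); nra.
Qed.

Lemma key a u1 u2 u3 (x : pt) : 0 < a -> good3 u1 u2 u3 ->
  Rabs (px x) + Rabs (py x) + Rabs (pz x) <= 5 * a / 16 ->
  dist3 x (0, 0, 0) <= dist3 x (tri a u1 u2 u3).
Proof.
  intros Ha [g1 [g2 g3]] Hx.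
  destruct x as [[x1 x2] x3]. unfold dist3, tri, px, py, pz in *; simpl in *.
  apply sqrt_le_1_alt.
  set (S := u1^2 + u2^2 + u3^2) in *.
  assert (S0 : 0 <= S) by (unfold S; pose proof (sq0 u1); pose proof (sq0 u2); pose proof (sq0 u3); lra).
  assert (b1 : x1 * u1 <= Rabs x1 * Rabs u1) by (rewrite <- Rabs_mult; apply Rle_abs).
  assert (b2 : x2 * u2 <= Rabs x2 * Rabs u2) by (rewrite <- Rabs_mult; apply Rle_abs).
  assert (b3 : x3 * u3 <= Rabs x3 * Rabs u3) by (rewrite <- Rabs_mult; apply Rle_abs).
  pose proof (Rabs_pos x1); pose proof (Rabs_pos x2); pose proof (Rabs_pos x3).
  assert (c1 : Rabs x1 * (5/8 * Rabs u1) <= Rabs x1 * S) by (apply Rmult_le_compat_l; auto).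
  assert (c2 : Rabs x2 * (5/8 * Rabs u2) <= Rabs x2 * S) by (apply Rmult_le_compat_l; auto).
  assert (c3 : Rabs x3 * (5/8 * Rabs u3) <= Rabs x3 * S) by (apply Rmult_le_compat_l; auto).
  assert (d : (Rabs x1 + Rabs x2 + Rabs x3) * S <= 5 * a / 16 * S) by (apply Rmult_le_compat_r; auto).
  assert (e : x1 * u1 + x2 * u2 + x3 * u3 <= a * S / 2) by nra.
  assert (f : 2 * a * (x1 * u1 + x2 * u2 + x3 * u3) <= a * (a * S)) by nra.
  unfold S in f. nra.
Qed.

Lemma L3_dec a q : L3 a q -> exists u1 u2 u3, q = tri a u1 u2 u3 /\ good3 u1 u2 u3.
Proof.
  intros [h|[h|h]].
  - apply BCC_iff in h. destruct h as (u1&u2&u3&->&h). exists u1, u2, u3; split; auto.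
    apply goodBCC; auto.
  - apply W_iff in h. destruct h as (u1&u2&u3&->&h). exists u1, u2, u3; split; auto.
    apply goodW; auto.
  - destruct h as (b & s1 & s2 & s3 & hb & e1 & e2 & e3 & ->).
    apply BCC_iff in hb. destruct hb as (d1&d2&d3&->&hd).
    exists (d1 + 5/24 * s1), (d2 + 5/24 * s2), (d3 + 5/24 * s3); split.
    + unfold tri, px, py, pz; simpl. f_equal; [f_equal|]; field.
    + apply goodLam; auto.
Qed.

Lemma oct0 a (x : pt) : 0 < a ->
  voronoi (L3 a) (0, 0, 0) x <-> Rabs (px x) + Rabs (py x) + Rabs (pz x) <= 5 * a / 16.
Proof.
  intros Ha. split.
  - intros H.
    assert (G : forall s1 s2 s3, (s1 = -1 \/ s1 = 1) -> (s2 = -1 \/ s2 = 1) -> (s3 = -1 \/ s3 = 1) ->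
              s1 * px x + s2 * py x + s3 * pz x <= 5 * a / 16).
    { intros s1 s2 s3 e1 e2 e3.
      assert (Hq : L3 a (tri a (0 + 5/24 * s1) (0 + 5/24 * s2) (0 + 5/24 * s3))).
      { right; right. exists (0, 0, 0), s1, s2, s3. repeat split; auto.
        - exists 0%Z, 0%Z, 0%Z; left. unfold tri; simpl. f_equal; [f_equal|]; ring.
        - unfold tri, px, py, pz; simpl. f_equal; [f_equal|]; field. }
      specialize (H _ Hq).
      destruct x as [[x1 x2] x3]. unfold dist3, tri, px, py, pz in *; simpl in *.
      apply sqrt_le_0 in H; try apply sum3.
      assert (E : s1^2 = 1 /\ s2^2 = 1 /\ s3^2 = 1) by (destruct e1, e2, e3; subst; repeat split; ring).
      destruct E as (E1&E2&E3).
      nra. }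
    assert (Hs : forall s, s = -1 \/ s = 1 -> s = -1 \/ s = 1) by auto.
    destruct (Rle_or_lt 0 (px x)), (Rle_or_lt 0 (py x)), (Rle_or_lt 0 (pz x));
      first
        [ solve [pose proof (G 1 1 1 (Hs 1 ltac:(lra)) (Hs 1 ltac:(lra)) (Hs 1 ltac:(lra))); rabs; lra]
        | solve [pose proof (G 1 1 (-1) (Hs 1 ltac:(lra)) (Hs 1 ltac:(lra)) (Hs (-1) ltac:(lra))); rabs; lra]
        | solve [pose proof (G 1 (-1) 1 (Hs 1 ltac:(lra)) (Hs (-1) ltac:(lra)) (Hs 1 ltac:(lra))); rabs; lra]
        | solve [pose proof (G 1 (-1) (-1) (Hs 1 ltac:(lra)) (Hs (-1) ltac:(lra)) (Hs (-1) ltac:(lra))); rabs; lra]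
        | solve [pose proof (G (-1) 1 1 (Hs (-1) ltac:(lra)) (Hs 1 ltac:(lra)) (Hs 1 ltac:(lra))); rabs; lra]
        | solve [pose proof (G (-1) 1 (-1) (Hs (-1) ltac:(lra)) (Hs 1 ltac:(lra)) (Hs (-1) ltac:(lra))); rabs; lra]
        | solve [pose proof (G (-1) (-1) 1 (Hs (-1) ltac:(lra)) (Hs (-1) ltac:(lra)) (Hs 1 ltac:(lra))); rabs; lra]
        | solve [pose proof (G (-1) (-1) (-1) (Hs (-1) ltac:(lra)) (Hs (-1) ltac:(lra)) (Hs (-1) ltac:(lra))); rabs; lra] ].
  - intros Hx q Hq. destruct (L3_dec a q Hq) as (u1&u2&u3&->&g).
    apply key; auto.
Qed.

Definition padd (p q : pt) : pt := (px p + px q, py p + py q, pz p + pz q).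
Definition pneg (p : pt) : pt := (- px p, - py p, - pz p).

Lemma padd_tri a u1 u2 u3 d1 d2 d3 :
  padd (tri a u1 u2 u3) (tri a d1 d2 d3) = tri a (u1 + d1) (u2 + d2) (u3 + d3).
Proof. unfold padd, tri, px, py, pz; simpl. f_equal; [f_equal|]; ring. Qed.

Ltac cls := solve [eauto using addZZ, addZH, addHZ, addHH, addQZ, addQH, negZ, negH].
Ltac solve_conj := repeat split; cls.
Ltac solve_disj := match goal with
  | |- ?A \/ ?B => first [left; solve_conj | right; solve_disj]
  | _ => solve_conj end.

Lemma BCC_add a p q : BCC a p -> BCC a q -> BCC a (padd q p).
Proof.
  rewrite !BCC_iff. intros (d1&d2&d3&->&hd) (u1&u2&u3&->&hu).
  rewrite padd_tri. do 3 eexists; split; [reflexivity|].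
  unfold BCCc in *. destruct hd as [(?&?&?)|(?&?&?)]; destruct hu as [(?&?&?)|(?&?&?)]; solve_disj.
Qed.

Lemma BCC_neg a p : BCC a p -> BCC a (pneg p).
Proof.
  rewrite !BCC_iff. intros (d1&d2&d3&->&hd).
  exists (-d1), (-d2), (-d3); split.
  - unfold pneg, tri, px, py, pz; simpl. f_equal; [f_equal|]; ring.
  - unfold BCCc in *. destruct hd as [(?&?&?)|(?&?&?)]; solve_disj.
Qed.

Lemma W_add a p q : BCC a p -> Wset a q -> Wset a (padd q p).
Proof.
  rewrite BCC_iff, !W_iff. intros (d1&d2&d3&->&hd) (u1&u2&u3&->&hu).
  rewrite padd_tri. do 3 eexists; split; [reflexivity|].
  unfold BCCc, Wc in *. destruct hd as [(?&?&?)|(?&?&?)];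
  destruct hu as [(?&?&?)|[(?&?&?)|[(?&?&?)|[(?&?&?)|[(?&?&?)|(?&?&?)]]]]]; solve_disj.
Qed.

Lemma Lam_add a p q : BCC a p -> Lam a q -> Lam a (padd q p).
Proof.
  intros hp (b & s1 & s2 & s3 & hb & e1 & e2 & e3 & ->).
  exists (padd b p), s1, s2, s3. repeat split; auto.
  - apply BCC_add; auto.
  - unfold padd, px, py, pz; simpl. f_equal; [f_equal|]; ring.
Qed.

Lemma L3_add a p q : BCC a p -> L3 a q -> L3 a (padd q p).
Proof.
  intros hp [h|[h|h]].
  - left; apply BCC_add; auto.
  - right; left; apply W_add; auto.
  - right; right; apply Lam_add; auto.
Qed.

Definition psub (p q : pt) : pt := (px p - px q, py p - py q, pz p - pz q).

Lemma vor_tr a p x : BCC a p ->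
  (voronoi (L3 a) p x <-> voronoi (L3 a) (0, 0, 0) (psub x p)).
Proof.
  intros hp. split.
  - intros H q' hq'.
    specialize (H (padd q' p) (L3_add a p q' hp hq')).
    replace (dist3 (psub x p) (0,0,0)) with (dist3 x p).
    + replace (dist3 (psub x p) q') with (dist3 x (padd q' p)); auto.
      unfold dist3, psub, padd, px, py, pz; simpl. f_equal; ring.
    + unfold dist3, psub, padd, px, py, pz; simpl. f_equal; ring.
  - intros H q hq.
    specialize (H (padd q (pneg p)) (L3_add a _ q (BCC_neg a p hp) hq)).
    replace (dist3 x p) with (dist3 (psub x p) (0,0,0)).
    + replace (dist3 x q) with (dist3 (psub x p) (padd q (pneg p))); auto.
      unfold dist3, psub, padd, pneg, px, py, pz; simpl. f_equal; ring.
    + unfold dist3, psub, padd, px, py, pz; simpl. f_equal; ring.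
Qed.

Theorem mainTheorem6 (a : R) (ha : 0 < a) :
  (* Voronoi cell of the origin is the octahedron |x|+|y|+|z| <= 5a/16 *)
  (forall x : pt, voronoi (L3 a) (0, 0, 0) x <->
     Rabs (px x) + Rabs (py x) + Rabs (pz x) <= 5 * a / 16) /\
  (* its volume is 125 a^3 / 3072 *)
  vol3 (voronoi (L3 a) (0, 0, 0)) (0, 0, 0) a (125 / 3072 * a ^ 3) /\
  (* the same holds, after translation, for every point of the BCC lattice *)
  (forall p : pt, BCC a p ->
     (forall x : pt, voronoi (L3 a) p x <->
        Rabs (px x - px p) + Rabs (py x - py p) + Rabs (pz x - pz p) <= 5 * a / 16) /\
     vol3 (voronoi (L3 a) p) p a (125 / 3072 * a ^ 3)).
Proof.
  split; [intros x; apply oct0; auto|split].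
  - replace (125 / 3072 * a ^ 3) with (4 * (5 * a / 16) ^ 3 / 3) by field.
    apply vol_oct; [lra|]. intros y. rewrite oct0 by auto.
    change (px (0,0,0)) with 0; change (py (0,0,0)) with 0; change (pz (0,0,0)) with 0.
    rewrite !Rminus_0_r. reflexivity.
  - intros p hp.
    assert (E : forall x, voronoi (L3 a) p x <->
        Rabs (px x - px p) + Rabs (py x - py p) + Rabs (pz x - pz p) <= 5 * a / 16).
    { intros x. rewrite vor_tr by auto. rewrite oct0 by auto.
      unfold psub, px, py, pz; simpl. reflexivity. }
    split; auto.
    replace (125 / 3072 * a ^ 3) with (4 * (5 * a / 16) ^ 3 / 3) by field.
    apply vol_oct; [lra|]. exact E.
Qed.
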